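(* Let $X$ be a germ of holomorphic vector field at $(\mathbb{C}^n,0)$ with an isolated singularity at $0$, $\mathcal{F}=\mathcal{F}^X$, and $V\in\mathrm{Sep}_0(\mathcal{F})$. Then $\mathrm{in}(X)|_{C(V,0)}\not\equiv 0$ if and only if $\nu(\mathcal{F},0)=1+r_V(\mathcal{F})$.
   Context: For $X=\sum_i f_i\partial/\partial z_i$ with $\gcd(f_i)=1$, $\nu(\mathcal{F},0)=\min_i\mathrm{ord}_0 f_i$, and $\mathrm{in}(X)$ is the initial part of $X$, i.e. the homogeneous part of degree $\nu(\mathcal{F},0)$ of $X$ (a vector field with homogeneous polynomial coefficients). $C(V,0)$ is the tangent cone of $V$ at $0$. $\mathrm{Sep}_0(\mathcal{F})$ is the set of irreducible germs of complex analytic curves at $0$ invariant by $X$. For $V\in\mathrm{Sep}_0(\mathcal{F})$ with Puiseux parametrization $\alpha$, there is a unique holomorphic $g$ with $X\circ\alpha(t)=g(t)\alpha'(t)$, and $\mathrm{ind}_0(\mathcal{F}|_V)=\mathrm{ord}_0 g$. $m(V,0)$ is the multiplicity of $V$ at $0$, and $r_V(\mathcal{F})=\frac{\mathrm{ind}_0(\mathcal{F}|_V)-1}{m(V,0)}$. *)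

(* Defs.v *)
(* complex numbers C = R[i] for R : realType (mathcomp-real-closed),
   germs represented by convergent power series (coefficient functions). *)
From HB Require Import structures.
From mathcomp Require Import all_boot all_order all_algebra.
From mathcomp Require Import reals complex.
From Stdlib Require Import ClassicalEpsilon.
Set Implicit Arguments. Unset Strict Implicit. Unset Printing Implicit Defensive.
Import Order.TTheory GRing.Theory Num.Theory.
Local Open Scope ring_scope.

Section Germs.
Variable R : realType.
Local Notation C := R[i].

Definition ps1 := nat -> C.
Definition mi (n : nat) := {ffun 'I_n -> nat}.
Definition psn (n : nat) := mi n -> C.
Definition mdeg n (b : mi n) : nat := (\sum_(i < n) b i)%N.
Definition mi_of n N (b : {ffun 'I_n -> 'I_N.+1}) : mi n := [ffun i => nat_of_ord (b i)].
Definition mi0 n : mi n := [ffun => 0%N].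
Definition mon n (b : mi n) (z : 'I_n -> C) : C := \prod_(i < n) z i ^+ b i.

Definition conv1 (a : ps1) : Prop :=
  exists r : C, 0 < r /\ exists M : C, forall N,
    \sum_(k < N.+1) `|a k| * r ^+ k <= M.
Definition convn n (f : psn n) : Prop :=
  exists r : C, 0 < r /\ exists M : C, forall N,
    \sum_(b : {ffun 'I_n -> 'I_N.+1}) `|f (mi_of b)| * r ^+ mdeg (mi_of b) <= M.

Definition cvg_to (u : nat -> C) (L : C) : Prop :=
  forall e : C, 0 < e -> exists N, forall k, (N <= k)%N -> `|u k - L| < e.
Definition sum1 (a : ps1) (t : C) (L : C) : Prop :=
  cvg_to (fun N => \sum_(k < N) a k * t ^+ k) L.
Definition sumn n (f : psn n) (z : 'I_n -> C) (L : C) : Prop :=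
  cvg_to (fun N => \sum_(b : {ffun 'I_n -> 'I_N.+1}) f (mi_of b) * mon (mi_of b) z) L.

(* order at 0 of a one-variable series (0 for the zero series) *)
Definition ord1 (a : ps1) : nat :=
  match excluded_middle_informative (exists k, a k != 0) with
  | left P => ex_minn P
  | right _ => 0%N
  end.

Definition deriv1 (a : ps1) : ps1 := fun k => a k.+1 *+ k.+1.
Definition mul1 (a b : ps1) : ps1 := fun k => \sum_(j < k.+1) a j * b (k - j)%N.
(* composition f o alpha for alpha(0) = 0: coefficient of t^k *)
Definition trunc1 (a : ps1) (k : nat) : {poly C} := \poly_(j < k.+1) a j.
Definition pscomp n (f : psn n) (alpha : 'I_n -> ps1) : ps1 := fun k =>
  \sum_(b : {ffun 'I_n -> 'I_k.+1})
     f (mi_of b) * (\prod_(i < n) trunc1 (alpha i) k ^+ b i)`_k.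

Definition holo_vf n (X : 'I_n -> psn n) : Prop := forall i, convn (X i).
Definition isolated_sing n (X : 'I_n -> psn n) : Prop :=
  (forall i, X i (mi0 n) = 0) /\
  exists rho : C, 0 < rho /\ forall z : 'I_n -> C, (forall i, `|z i| < rho) ->
     (forall i, sumn (X i) z 0) -> forall i, z i = 0.

Definition nu0_P n (X : 'I_n -> psn n) (k : nat) : bool :=
  [exists i, [exists b : {ffun 'I_n -> 'I_k.+1},
     (mdeg (mi_of b) == k) && (X i (mi_of b) != 0)]].
Definition nu0 n (X : 'I_n -> psn n) : nat :=
  match excluded_middle_informative (exists k, nu0_P X k) with
  | left P => ex_minn P
  | right _ => 0%N
  end.
Definition initX n (X : 'I_n -> psn n) (i : 'I_n) (w : 'I_n -> C) : C :=
  \sum_(b : {ffun 'I_n -> 'I_(nu0 X).+1} | mdeg (mi_of b) == nu0 X)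
     X i (mi_of b) * mon (mi_of b) w.

(* Puiseux parametrization alpha : (C,0) -> (C^n,0): convergent, alpha(0)=0,
   injective on a small disc (normalization of the irreducible curve germ V) *)
Definition puiseux n (alpha : 'I_n -> ps1) : Prop :=
  (forall i, conv1 (alpha i)) /\ (forall i, alpha i 0%N = 0) /\
  exists eps : C, 0 < eps /\ forall (s t : C) (x y : 'I_n -> C),
    `|s| < eps -> `|t| < eps ->
    (forall i, sum1 (alpha i) s (x i)) -> (forall i, sum1 (alpha i) t (y i)) ->
    (forall i, x i = y i) -> s = t.

Definition multV n (alpha : 'I_n -> ps1) : nat :=
  match excluded_middle_informative (exists k, [exists i, alpha i k != 0]) with
  | left P => ex_minn P
  | right _ => 0%N
  end.

Definition tcone n (alpha : 'I_n -> ps1) (w : 'I_n -> C) : Prop :=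
  exists (t : nat -> C) (lam : nat -> C) (x : nat -> 'I_n -> C),
    cvg_to t 0 /\ (forall k i, sum1 (alpha i) (t k) (x k i)) /\
    forall i, cvg_to (fun k => lam k * x k i) (w i).

(* V = alpha(C,0) is invariant by X: X(alpha(t)) and alpha'(t) are parallel *)
Definition vf_invariant n (X : 'I_n -> psn n) (alpha : 'I_n -> ps1) : Prop :=
  forall i j k, mul1 (pscomp (X i) alpha) (deriv1 (alpha j)) k
              = mul1 (pscomp (X j) alpha) (deriv1 (alpha i)) k.

Definition index_fun n (X : 'I_n -> psn n) (alpha : 'I_n -> ps1) (g : ps1) : Prop :=
  conv1 g /\ forall i k, pscomp (X i) alpha k = mul1 g (deriv1 (alpha i)) k.

(* r_V(F) = (ind_0(F|_V) - 1) / m(V,0) *)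
Definition rV n (alpha : 'I_n -> ps1) (g : ps1) : rat :=
  ((ord1 g)%:R - 1) / (multV alpha)%:R.

End Germs.

(* Main.v *)
Require Import Defs.
From HB Require Import structures.
From mathcomp Require Import all_boot all_order all_algebra.
From mathcomp Require Import reals complex.
From mathcomp Require Import boolp classical_sets.
From mathcomp Require Import lra ring zify.
From Stdlib Require Import Classical_Prop.
From Stdlib Require Import ClassicalEpsilon.
Import Order.TTheory GRing.Theory Num.Theory.
Set Implicit Arguments. Unset Strict Implicit. Unset Printing Implicit Defensive.
Local Open Scope ring_scope.

Section Ana.
Variable R : realType.
Local Notation C := R[i].
Local Notation nc := (@ComplexField.Normc.normc R).
Local Open Scope complex_scope.

Lemma mono_cvg (u : nat -> R) (M : R) :
  (forall k, u k <= u k.+1) -> (forall k, u k <= M) ->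
  exists L, forall e, 0 < e -> exists N, forall k, (N <= k)%N -> `|u k - L| < e.
Proof.
move=> hu hM.
have mono : forall j k, (j <= k)%N -> u j <= u k.
  move=> j k /subnK <-; elim: (k - j)%N => [|d IH]; first by rewrite add0n.
  by rewrite addSn (le_trans IH).
set E := [set x | exists k, x = u k]%classic.
have hs : has_sup E.
  split; first by exists (u 0%N), 0%N.
  by exists M => x [k ->].
exists (sup E) => e e0.
have [x [N ->] hN] := sup_adherent e0 hs.
exists N => k hk.
have ub : u k <= sup E by apply: sup_upper_bound => //; exists k.
have := mono _ _ hk.
rewrite ltr_norml; move: hN ub; lra.
Qed.

Lemma abs_cvgR (c : nat -> R) M : (forall N, \sum_(k < N) `|c k| <= M) ->
  exists L, forall e, 0 < e -> exists N, forall k, (N <= k)%N ->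
    `|\sum_(j < k) c j - L| < e.
Proof.
move=> hM.
have hP : forall k, \sum_(j < k) (`|c j| + c j) <= \sum_(j < k.+1) (`|c j| + c j).
  move=> k; rewrite big_ord_recr /= lerDl.
  have := ler_norm (- c k); rewrite normrN; lra.
have hQ : forall k, \sum_(j < k) `|c j| <= \sum_(j < k.+1) `|c j|.
  by move=> k; rewrite big_ord_recr /= lerDl.
have hPb : forall k, \sum_(j < k) (`|c j| + c j) <= M + M.
  move=> k; rewrite big_split /= lerD //; first exact: hM.
  by apply: le_trans (hM k); apply: ler_sum => j _; apply: ler_norm.
have [LP hLP] := mono_cvg hP hPb.
have [LQ hLQ] := mono_cvg hQ hM.
exists (LP - LQ) => e e0.
have e2 : 0 < e / 2 by lra.
have [N1 h1] := hLP _ e2; have [N2 h2] := hLQ _ e2.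
exists (maxn N1 N2) => k hk.
have := h1 k (leq_trans (leq_maxl _ _) hk).
have := h2 k (leq_trans (leq_maxr _ _) hk).
rewrite big_split /=.
set S := \sum_(j < k) c j; set Q := \sum_(j < k) `|c j|.
rewrite !ltr_norml => /andP[a1 a2] /andP[b1 b2]; apply/andP; split; lra.
Qed.

Lemma nc_ge0 (z : C) : 0 <= nc z.
Proof. by case: z => a b; rewrite /ComplexField.Normc.normc sqrtr_ge0. Qed.

Lemma ncD (x y : C) : nc (x + y) <= nc x + nc y.
Proof. exact: (@le_normcD R x y). Qed.

Lemma ncM (x y : C) : nc (x * y) = nc x * nc y.
Proof. exact: ComplexField.Normc.normcM. Qed.

Lemma ncN (x : C) : nc (- x) = nc x.
Proof. exact: (@normcN R x). Qed.

Lemma ncX (x : C) k : nc (x ^+ k) = nc x ^+ k.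
Proof.
elim: k => [|k IH]; first by rewrite !expr0 ComplexField.Normc.normc1.
by rewrite !exprS ncM IH.
Qed.

Lemma ncC (a : R) : nc a%:C = `|a|.
Proof.
by rewrite /ComplexField.Normc.normc /= expr0n /= addr0 sqrtr_sqr.
Qed.

Lemma nc0 : nc 0 = 0. Proof. exact: ComplexField.Normc.normc0. Qed.

Lemma nc_eq0 (z : C) : nc z = 0 -> z = 0.
Proof. exact: ComplexField.Normc.eq0_normc. Qed.

Lemma ncB (x y : C) : nc (x - y) = nc (y - x).
Proof. by rewrite -opprB ncN. Qed.

Lemma nc_sum N (F : 'I_N -> C) : nc (\sum_(i < N) F i) <= \sum_(i < N) nc (F i).
Proof.
elim: N F => [|N IH] F; first by rewrite !big_ord0 nc0.
rewrite !big_ord_recr /=; apply: le_trans (ncD _ _) _; rewrite lerD2r; exact: IH.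
Qed.

Lemma Re_le (z : C) : `|complex.Re z| <= nc z :> R.
Proof.
case: z => a b /=; rewrite /ComplexField.Normc.normc -sqrtr_sqr.
by apply: ler_wsqrtr; rewrite lerDl sqr_ge0.
Qed.

Lemma Im_le (z : C) : `|complex.Im z| <= nc z :> R.
Proof.
case: z => a b /=; rewrite /ComplexField.Normc.normc -sqrtr_sqr.
by apply: ler_wsqrtr; rewrite lerDr sqr_ge0.
Qed.

Lemma nc_le (z : C) : nc z <= `|complex.Re z| + `|complex.Im z| :> R.
Proof.
case: z => a b /=; rewrite /ComplexField.Normc.normc.
rewrite -[X in _ <= X]ger0_norm ?addr_ge0 // -sqrtr_sqr.
apply: ler_wsqrtr; rewrite -[a ^+ 2]real_normK ?num_real // -[b ^+ 2]real_normK ?num_real //.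
have := normr_ge0 a; have := normr_ge0 b; nra.
Qed.

Lemma posC (r : C) : 0 < r -> r = (complex.Re r)%:C /\ 0 < complex.Re r.
Proof. by case: r => a b; rewrite ltcE /= => /andP[/eqP -> ->]. Qed.

Lemma cvgP (u : nat -> C) L : cvg_to u L <->
  forall e : R, 0 < e -> exists N, forall k, (N <= k)%N -> nc (u k - L) < e.
Proof.
split=> h e e0.
  have e0' : 0 < e%:C by rewrite ltcR.
  have [N hN] := h _ e0'; exists N => k /hN; by rewrite -ltcR.
have [-> e1] := posC e0; have [N hN] := h _ e1; exists N => k /hN.
by rewrite -ltcR.
Qed.

Lemma Re_sum k (c : nat -> C) : complex.Re (\sum_(j < k) c j) = \sum_(j < k) complex.Re (c j).
Proof.
elim: k => [|k IH]; first by rewrite !big_ord0.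
by rewrite !big_ord_recr /= -IH; case: (\sum_(j < k) c j) => ? ?; case: (c k).
Qed.

Lemma Im_sum k (c : nat -> C) : complex.Im (\sum_(j < k) c j) = \sum_(j < k) complex.Im (c j).
Proof.
elim: k => [|k IH]; first by rewrite !big_ord0.
by rewrite !big_ord_recr /= -IH; case: (\sum_(j < k) c j) => ? ?; case: (c k).
Qed.

Lemma abs_cvgC (c : nat -> C) M : (forall N, \sum_(k < N) nc (c k) <= M) ->
  exists L, cvg_to (fun N => \sum_(k < N) c k) L.
Proof.
move=> hM.
have [La hA] : exists L, forall e, 0 < e -> exists N, forall k, (N <= k)%N ->
    `|\sum_(j < k) complex.Re (c j) - L| < e.
  apply: (@abs_cvgR (fun j => complex.Re (c j)) M) => N; apply: le_trans (hM N).
  by apply: ler_sum => j _; apply: Re_le.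
have [Lb hB] : exists L, forall e, 0 < e -> exists N, forall k, (N <= k)%N ->
    `|\sum_(j < k) complex.Im (c j) - L| < e.
  apply: (@abs_cvgR (fun j => complex.Im (c j)) M) => N; apply: le_trans (hM N).
  by apply: ler_sum => j _; apply: Im_le.
exists (La +i* Lb); apply/cvgP => e e0.
have e2 : 0 < e / 2 by lra.
have [N1 h1] := hA _ e2; have [N2 h2] := hB _ e2.
exists (maxn N1 N2) => k hk.
have := h1 k (leq_trans (leq_maxl _ _) hk).
have := h2 k (leq_trans (leq_maxr _ _) hk).
move=> b a; apply: le_lt_trans (nc_le _) _.
have -> : complex.Re (\sum_(k0 < k) c k0 - La +i* Lb) = \sum_(j < k) complex.Re (c j) - La.
  by rewrite -Re_sum; case: (\sum_(k0 < k) c k0).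
have -> : complex.Im (\sum_(k0 < k) c k0 - La +i* Lb) = \sum_(j < k) complex.Im (c j) - Lb.
  by rewrite -Im_sum; case: (\sum_(k0 < k) c k0).
lra.
Qed.

Lemma lecRe (s : R) (M : C) : s%:C <= M -> s <= complex.Re M.
Proof. by rewrite lecE => /andP[]. Qed.

Lemma conv1R (a : ps1 R) : conv1 a ->
  exists r : R, 0 < r /\ exists M : R, forall N,
    \sum_(k < N) nc (a k) * r ^+ k <= M.
Proof.
move=> [r [r0 [M hM]]]; have [rE r'0] := posC r0.
exists (complex.Re r); split => //; exists (complex.Re M) => N.
have h : forall N, \sum_(k < N) nc (a k) * complex.Re r ^+ k <= complex.Re M.
  move=> N'; apply: lecRe; move: (hM N'); rewrite rE.
  have -> : \sum_(k < N'.+1) `|a k| * (complex.Re r)%:C ^+ k =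
            (\sum_(k < N'.+1) nc (a k) * complex.Re r ^+ k)%:C.
    by rewrite rmorph_sum; apply: eq_bigr => k _; rewrite rmorphM rmorphXn.
  move=> h; apply: le_trans h; rewrite lecR big_ord_recr /= lerDl.
  by rewrite mulr_ge0 ?nc_ge0 // exprn_ge0 // ltW.
exact: h.
Qed.

Lemma lim_le (u : nat -> C) x y (E : R) K : cvg_to u x ->
  (forall N, (K <= N)%N -> nc (u N - y) <= E) -> nc (x - y) <= E.
Proof.
move=> /cvgP hu hE; rewrite leNgt; apply/negP => hlt.
have e0 : 0 < nc (x - y) - E by lra.
have [N hN] := hu _ e0.
have h1 := hN (maxn N K) (leq_maxl _ _).
have h2 := hE (maxn N K) (leq_maxr _ _).
have := ncD (x - u (maxn N K)) (u (maxn N K) - y).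
rewrite addrA subrK ncB; lra.
Qed.

Lemma series_est (a : ps1 R) m : conv1 a -> (forall k, (k < m)%N -> a k = 0) ->
  exists d : R, 0 < d /\ exists B : R, 0 <= B /\ forall t : C, nc t < d ->
    (exists x, sum1 a t x) /\
    (forall x, sum1 a t x -> nc (x - a m * t ^+ m) <= B * nc t ^+ m.+1).
Proof.
move=> /conv1R [r [r0 [M hM]]] hz.
have M0 : 0 <= M by have := hM 0%N; rewrite big_ord0.
have rm0 : 0 < r ^+ m.+1 by rewrite exprn_gt0.
exists r; split => //; exists (M / r ^+ m.+1); split; first by rewrite divr_ge0 // ltW.
move=> t ht; have t0 := nc_ge0 t; split.
  apply: (@abs_cvgC (fun k => a k * t ^+ k) M) => N; apply: le_trans (hM N).
  apply: ler_sum => k _; rewrite ncM ncX ler_wpM2l ?nc_ge0 //.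
  by apply: lerXn2r; rewrite ?nnegrE ?nc_ge0 ?ltW.
move=> x hx; apply: (lim_le (K := m.+1) hx) => N hN.
pose b k := if k == m then 0 else a k.
have -> : \sum_(k < N) a k * t ^+ k =
          \sum_(k < N) b k * t ^+ k + a m * t ^+ m.
  transitivity (\sum_(k < N) (b k * t ^+ k + (if (k : nat) == m then a m * t ^+ m else 0))).
    apply: eq_bigr => k _; rewrite /b; case: eqP => [->|_]; first by rewrite mul0r add0r.
    by rewrite addr0.
  by rewrite big_split /= -big_mkcond (big_ord1_eq _ (fun _ => a m * t ^+ m) m N) hN.
rewrite addrK; apply: le_trans (nc_sum _) _.
apply: (@le_trans _ _ (\sum_(k < N) nc (a k) * r ^+ k * (nc t ^+ m.+1 / r ^+ m.+1))).
  apply: ler_sum => k _; rewrite ncM ncX /b.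
  case: (ltnP m k) => hk.
    have -> : ((k : nat) == m) = false by apply/negbTE; rewrite neq_ltn hk orbT.
    have kE : (k : nat) = (m.+1 + (k - m.+1))%N by rewrite subnKC.
    rewrite kE !exprD.
    have -> : nc (a (m.+1 + (k - m.+1))%N) * (r ^+ m.+1 * r ^+ (k - m.+1)) *
       (nc t ^+ m.+1 / r ^+ m.+1) =
       nc (a (m.+1 + (k - m.+1))%N) * (nc t ^+ m.+1 * r ^+ (k - m.+1)).
      by field; rewrite gt_eqF.
    rewrite ler_wpM2l ?nc_ge0 // ler_wpM2l ?exprn_ge0 //.
    by apply: lerXn2r; rewrite ?nnegrE ?nc_ge0 ?ltW.
  case: eqP => hkm.
    rewrite nc0 mul0r.
    apply: mulr_ge0; first by apply: mulr_ge0; [exact: nc_ge0|exact: exprn_ge0 (ltW r0)].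
    by apply: divr_ge0; apply: exprn_ge0; [exact: nc_ge0|exact: ltW r0].
  rewrite hz; last by rewrite ltn_neqAle hk andbT; apply/eqP.
  by rewrite nc0 !mul0r.
rewrite -mulr_suml.
have -> : M / r ^+ m.+1 * nc t ^+ m.+1 = M * (nc t ^+ m.+1 / r ^+ m.+1) by ring.
apply: ler_wpM2r => //; by apply: divr_ge0; apply: exprn_ge0; [exact: nc_ge0|exact: ltW r0].
Qed.

Lemma req_le (x y : R) : x = y -> x <= y. Proof. by move=> ->. Qed.

Lemma nc_small (z : C) : (forall eps : R, 0 < eps -> nc z <= eps) -> z = 0.
Proof.
move=> h; apply/eqP; apply/negPn/negP => hz.
have hp : 0 < nc z.
  rewrite lt_def nc_ge0 andbT; apply/eqP => /nc_eq0 /eqP; exact/negP.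
have := h (nc z / 2); lra.
Qed.

Lemma nc_pos (z : C) : z != 0 -> 0 < nc z.
Proof. by move=> hz; rewrite lt_def nc_ge0 andbT; apply/eqP => /nc_eq0 /eqP; exact/negP. Qed.

Lemma tcone_line n (alpha : 'I_n -> ps1 R) m i0 w :
  (forall i, conv1 (alpha i)) -> (forall i k, (k < m)%N -> alpha i k = 0) ->
  alpha i0 m != 0 -> tcone alpha w ->
  forall i, w i * alpha i0 m = w i0 * alpha i m.
Proof.
move=> hc hz hv [t [lam [x [ht [hx hw]]]]] i.
set v0 := alpha i0 m; set vi := alpha i m.
have [d1 [d1p [B1 [B1p h1]]]] := series_est (hc i) (hz i).
have [d0 [d0p [B0 [B0p h0]]]] := series_est (hc i0) (hz i0).
have V0p : 0 < nc v0 by exact: nc_pos.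
apply/eqP; rewrite -subr_eq0; apply/eqP; apply: nc_small => eps epsp.
pose W := nc (w i0) + 1; have hW : W = nc (w i0) + 1 by []; clearbody W.
pose Vi := nc vi; have hVi : nc vi = Vi by []; clearbody Vi.
pose V0 := nc v0; have hV0 : nc v0 = V0 by []; clearbody V0.
rewrite hV0 in V0p.
have Wp : 0 < W by rewrite hW; have := nc_ge0 (w i0); lra.
have Vip : 0 <= Vi by rewrite -hVi; exact: nc_ge0.
pose S := B1 * V0 + B0 * Vi; have hS : S = B1 * V0 + B0 * Vi by []; clearbody S.
have Sp : 0 <= S by rewrite hS; apply: addr_ge0; apply: mulr_ge0 => //; exact: ltW.
pose K := 2 * W / V0 * S; have hK : K = 2 * W / V0 * S by []; clearbody K.
have Kp : 0 <= K by rewrite hK; apply: mulr_ge0 => //; apply: divr_ge0; [lra | exact: ltW].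
pose e1 := eps / (2 * (V0 + Vi + 1)); have he1 : e1 = eps / (2 * (V0 + Vi + 1)) by [].
clearbody e1.
have e1p : 0 < e1 by rewrite he1; apply: divr_gt0 => //; lra.
have c1p : 0 < V0 / (2 * B0 + 1) by apply: divr_gt0 => //; lra.
have c2p : 0 < eps / (2 * (K + 1)) by apply: divr_gt0 => //; lra.
move/cvgP: ht => ht.
have [Na hNa] := ht _ d1p; have [Nb hNb] := ht _ d0p.
have [Nc hNc] := ht _ c1p; have [Nd hNd] := ht _ c2p.
have [Ne hNe] := (iffLR (cvgP _ _) (hw i)) _ e1p.
have [Nf hNf] := (iffLR (cvgP _ _) (hw i0)) _ e1p.
have [Ng hNg] := (iffLR (cvgP _ _) (hw i0)) _ ltr01.
pose k := maxn Na (maxn Nb (maxn Nc (maxn Nd (maxn Ne (maxn Nf Ng))))).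
have hka : (Na <= k)%N by rewrite /k !leq_max leqnn ?orbT.
have hkb : (Nb <= k)%N by rewrite /k !leq_max leqnn ?orbT.
have hkc : (Nc <= k)%N by rewrite /k !leq_max leqnn ?orbT.
have hkd : (Nd <= k)%N by rewrite /k !leq_max leqnn ?orbT.
have hke : (Ne <= k)%N by rewrite /k !leq_max leqnn ?orbT.
have hkf : (Nf <= k)%N by rewrite /k !leq_max leqnn ?orbT.
have hkg : (Ng <= k)%N by rewrite /k !leq_max leqnn ?orbT.
move: (hNa k hka) (hNb k hkb) (hNc k hkc) (hNd k hkd) (hNe k hke) (hNf k hkf) (hNg k hkg).
rewrite !subr0.
move: (hx k i) (hx k i0).
move: (t k) (lam k) (x k i) (x k i0) => T L Xi X0 hxi hx0.
move=> ta tb tc td te tf tg.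
have hei := (h1 T ta).2 Xi hxi.
have he0 := (h0 T tb).2 X0 hx0.
rewrite -/vi in hei; rewrite -/v0 in he0.
move: hei he0.
move Eei: (Xi - vi * T ^+ m) => ei.
move Ee0: (X0 - v0 * T ^+ m) => e0 hei he0.
have hXi : Xi = ei + vi * T ^+ m by rewrite -Eei subrK.
have hX0 : X0 = e0 + v0 * T ^+ m by rewrite -Ee0 subrK.
clear Eei Ee0; subst Xi X0.
pose tau := nc T; have htau : nc T = tau by []; clearbody tau.
have taup : 0 <= tau by rewrite -htau; exact: nc_ge0.
pose a := nc L * tau ^+ m; have ha : a = nc L * tau ^+ m by []; clearbody a.
have ap : 0 <= a by rewrite ha; apply: mulr_ge0; [exact: nc_ge0|exact: exprn_ge0].
rewrite htau in ta tb tc td hei he0.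
have hLe0 : nc (L * e0) <= a * B0 * tau.
  rewrite ncM; apply: (le_trans (ler_wpM2l (nc_ge0 L) he0)).
  by rewrite ha exprS; apply: req_le; ring.
have hLei : nc (L * ei) <= a * B1 * tau.
  rewrite ncM; apply: (le_trans (ler_wpM2l (nc_ge0 L) hei)).
  by rewrite ha exprS; apply: req_le; ring.
have hLX0 : nc (L * (e0 + v0 * T ^+ m)) <= W.
  have := ncD (L * (e0 + v0 * T ^+ m) - w i0) (w i0); rewrite subrK hW; lra.
have haV0 : a * V0 <= nc (L * (e0 + v0 * T ^+ m)) + a * B0 * tau.
  have -> : a * V0 = nc (L * (e0 + v0 * T ^+ m) - L * e0).
    rewrite mulrDr addrAC subrr add0r !ncM ncX htau ha -hV0; ring.
  apply: le_trans (ncD _ _) _; rewrite ncN; lra.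
have B0tau : 2 * B0 * tau < V0.
  move: tc; rewrite ltr_pdivlMr; last lra.
  have := mulr_ge0 B0p taup; nra.
have aV0 : a * V0 <= 2 * W.
  have : a * (V0 - 2 * B0 * tau) >= 0 by apply: mulr_ge0 => //; lra.
  nra.
have aK : a <= 2 * W / V0 by rewrite ler_pdivlMr.
have hD : nc (L * (ei + vi * T ^+ m) * v0 - L * (e0 + v0 * T ^+ m) * vi) <= a * tau * S.
  have -> : L * (ei + vi * T ^+ m) * v0 - L * (e0 + v0 * T ^+ m) * vi
     = (L * ei) * v0 - (L * e0) * vi by ring.
  apply: le_trans (ncD _ _) _; rewrite ncN !(ncM _ v0) !(ncM _ vi) hV0 hVi hS.
  have := nc_ge0 (L * ei); have := nc_ge0 (L * e0).
  nra.
have tK : tau * (K + 1) < eps / 2.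
  move: td; rewrite ltr_pdivlMr; last lra.
  lra.
have aS : a * tau * S <= K * tau.
  have : a * tau * S <= 2 * W / V0 * tau * S.
    by apply: ler_wpM2r => //; apply: ler_wpM2r.
  by rewrite hK; move=> h; apply: (le_trans h); apply: req_le; ring.
set LXi := L * (ei + vi * T ^+ m) in te hD *.
set LX0 := L * (e0 + v0 * T ^+ m) in tf tg hD *.
have -> : w i * v0 - w i0 * vi =
  (w i - LXi) * v0 + (LX0 - w i0) * vi + (LXi * v0 - LX0 * vi) by ring.
apply: le_trans (ncD _ _) _; apply: le_trans (lerD (ncD _ _) (lexx _)) _.
rewrite !(ncM _ v0) !(ncM _ vi) hV0 hVi (ncB (w i)).
have : nc (LXi - w i) * V0 <= e1 * V0 by apply: ler_wpM2r; [exact: ltW|exact: ltW].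
have : nc (LX0 - w i0) * Vi <= e1 * Vi by apply: ler_wpM2r; [exact: Vip|exact: ltW].
have : e1 * (V0 + Vi) <= eps / 2.
  rewrite he1 mulrAC ler_pdivrMr; last lra.
  have : 0 <= eps * (V0 + Vi) by apply: mulr_ge0; lra.
  nra.
lra.
Qed.
Lemma fin_unif n (P : 'I_n -> nat -> Prop) :
  (forall i K K', (K <= K')%N -> P i K -> P i K') ->
  (forall i, exists K, P i K) -> exists K, forall i, P i K.
Proof.
move=> hm hex.
suff [K hK] : exists K, forall i, i \in enum 'I_n -> P i K.
  by exists K => i; apply: hK; rewrite mem_enum.
elim: (enum 'I_n) => [|j s [K1 h1]]; first by exists 0%N.
have [K2 h2] := hex j.
exists (K1 + K2)%N => i; rewrite in_cons => /orP[/eqP ->|hi].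
  by apply: hm h2; rewrite leq_addl.
by apply: hm (h1 _ hi); rewrite leq_addr.
Qed.

Lemma small_nat (e : R) : 0 < e -> exists N, forall k, (N <= k)%N -> (k.+1%:R)^-1 < e.
Proof.
move=> e0; exists (Num.Def.archi_bound e^-1) => k hk.
have e0' : 0 < e^-1 by rewrite invr_gt0.
have h1 := @archi_boundP _ e^-1 (ltW e0').
have h2 : (Num.Def.archi_bound e^-1)%:R <= k.+1%:R :> R by rewrite ler_nat; lia.
rewrite -[e]invrK ltf_pV2 ?posrE ?invr_gt0 ?ltr0Sn //.
exact: lt_le_trans h1 h2.
Qed.

Lemma invS_le (K K' : nat) : (K <= K')%N -> (K'.+1%:R)^-1 <= (K.+1%:R)^-1 :> R.
Proof. by move=> h; rewrite lef_pV2 ?posrE ?ltr0Sn // ler_nat. Qed.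

Lemma tcone_v n (alpha : 'I_n -> ps1 R) m :
  (forall i, conv1 (alpha i)) -> (forall i k, (k < m)%N -> alpha i k = 0) ->
  tcone alpha (fun i => alpha i m).
Proof.
move=> hc hz.
pose P i K := exists B : R, forall t : C, nc t <= (K.+1%:R)^-1 ->
  (exists x, sum1 (alpha i) t x) /\
  forall x, sum1 (alpha i) t x -> nc (x - alpha i m * t ^+ m) <= B * nc t ^+ m.+1.
have [K hK] : exists K, forall i, P i K.
  apply: fin_unif.
    move=> i K K' hKK' [B hB]; exists B => t ht; apply: hB.
    exact: le_trans ht (invS_le hKK').
  move=> i; have [d [d0 [B [B0 hB]]]] := series_est (hc i) (hz i).
  have [N hN] := small_nat d0.
  exists N, B => t ht; apply: hB; exact: le_lt_trans ht (hN N (leqnn N)).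
pose tt k := (((k + K).+1)%:R)^-1 : R.
have tt0 : forall k, 0 < tt k by move=> k; rewrite /tt invr_gt0 ltr0Sn.
have ncT : forall k, nc (tt k)%:C = tt k by move=> k; rewrite ncC ger0_norm // ltW.
have ttK : forall k, nc (tt k)%:C <= (K.+1%:R)^-1.
  by move=> k; rewrite ncT; apply: invS_le; rewrite leq_addl.
have hex : forall k i, exists x, sum1 (alpha i) (tt k)%:C x.
  move=> k i; have [B hB] := hK i; exact: (hB _ (ttK k)).1.
pose x k i := proj1_sig (constructive_indefinite_description _ (hex k i)).
have hx : forall k i, sum1 (alpha i) (tt k)%:C (x k i).
  by move=> k i; rewrite /x; case: constructive_indefinite_description.
exists (fun k => (tt k)%:C), (fun k => (((tt k)%:C) ^+ m)^-1), x.
split.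
  apply/cvgP => e e0; have [N hN] := small_nat e0; exists N => k hk.
  rewrite subr0 ncT; apply: hN; lia.
split; first exact: hx.
move=> i; apply/cvgP => e e0.
have [B hB] := hK i.
have B0 : 0 <= B.
  have := (hB _ (ttK 0%N)).2 _ (hx 0%N i).
  rewrite ncT => h; have := nc_ge0 (x 0%N i - alpha i m * (tt 0%N)%:C ^+ m).
  have := exprn_gt0 m.+1 (tt0 0%N) => h1 h2.
  have := le_trans h2 h; rewrite pmulr_lge0 //.
have eB : 0 < e / (B + 1) by apply: divr_gt0 => //; lra.
have [N hN] := small_nat eB; exists N => k hk.
have tk : tt k < e / (B + 1) by apply: hN; lia.
have htC : (tt k)%:C != 0.
  by apply/eqP => h; have := ncT k; rewrite h nc0; have := tt0 k; lra.
have htm : ((tt k)%:C ^+ m) != 0 by rewrite expf_neq0.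
have -> : ((tt k)%:C ^+ m)^-1 * x k i - alpha i m =
          ((tt k)%:C ^+ m)^-1 * (x k i - alpha i m * (tt k)%:C ^+ m).
  by rewrite mulrBr [alpha i m * _]mulrC mulrA mulVf // mul1r.
rewrite ncM ComplexField.Normc.normcV ncX ncT.
have := (hB _ (ttK k)).2 _ (hx k i); rewrite ncT => h.
apply: le_lt_trans (ler_wpM2l _ h) _; first by rewrite invr_ge0 exprn_ge0 // ltW.
have -> : (tt k ^+ m)^-1 * (B * tt k ^+ m.+1) = B * tt k.
  by rewrite exprS; field; rewrite expf_neq0 // gt_eqF.
 move: tk; rewrite ltr_pdivlMr; last lra.
have := tt0 k; nra.
Qed.
Lemma mdeg_ge n (b : mi n) i : (b i <= mdeg b)%N.
Proof. by rewrite /mdeg (bigD1 i) //= leq_addr. Qed.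

Lemma mi_of_surj n N (b : mi n) : (forall i, (b i <= N)%N) ->
  exists b' : {ffun 'I_n -> 'I_N.+1}, mi_of b' = b.
Proof.
move=> hb; exists [ffun i => inord (b i)]; apply/ffunP => i.
by rewrite /mi_of !ffunE inordK // ltnS.
Qed.

Lemma mdeg0 n (b : mi n) : mdeg b = 0%N -> b = mi0 n.
Proof.
move=> h; apply/ffunP => i; rewrite /mi0 ffunE; apply/eqP.
by rewrite -leqn0 -h mdeg_ge.
Qed.

Lemma reindex_mi n N K (G : mi n -> C) : (N <= K)%N ->
  \sum_(b : {ffun 'I_n -> 'I_K.+1} | mdeg (mi_of b) == N) G (mi_of b) =
  \sum_(b : {ffun 'I_n -> 'I_N.+1} | mdeg (mi_of b) == N) G (mi_of b).
Proof.
move=> hNK.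
have hNK' : (N.+1 <= K.+1)%N by [].
pose h (b : {ffun 'I_n -> 'I_N.+1}) : {ffun 'I_n -> 'I_K.+1} :=
  [ffun j => widen_ord hNK' (b j)].
pose h' (b : {ffun 'I_n -> 'I_K.+1}) : {ffun 'I_n -> 'I_N.+1} :=
  [ffun j => inord (b j)].
have mih : forall b, mi_of (h b) = mi_of b.
  by move=> b; apply/ffunP => j; rewrite /mi_of /h !ffunE.
rewrite (reindex_onto h h').
  apply: eq_big => b; last by move=> _; rewrite mih.
  rewrite mih; case: (mdeg (mi_of b) == N) => //=.
  apply/eqP/ffunP => j; rewrite /h' /h !ffunE; apply: val_inj => /=.
  by rewrite inordK.
move=> b /eqP hb; apply/ffunP => j; rewrite /h /h' !ffunE; apply: val_inj => /=.
rewrite inordK // ltnS -hb.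
have := mdeg_ge (mi_of b) j; by rewrite /mi_of ffunE.
Qed.

Lemma conv_low (a b : ps1 R) da db k :
  (forall j, (j < da)%N -> a j = 0) -> (forall j, (j < db)%N -> b j = 0) ->
  (k < da + db)%N -> mul1 a b k = 0.
Proof.
move=> ha hb hk; rewrite /mul1; apply: big1 => j _.
case: (ltnP j da) => hj; first by rewrite ha // mul0r.
rewrite hb ?mulr0 //.
have := ltn_ord j; lia.
Qed.

Lemma conv_lead (a b : ps1 R) da db :
  (forall j, (j < da)%N -> a j = 0) -> (forall j, (j < db)%N -> b j = 0) ->
  mul1 a b (da + db)%N = a da * b db.
Proof.
move=> ha hb; rewrite /mul1.
have hd : (da < (da + db).+1)%N by lia.
rewrite (bigD1 (Ordinal hd)) //= big1 ?addr0; first by rewrite addKn.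
move=> j hj; have hj' : (j : nat) != da by apply: contraNneq hj => e; apply/eqP/val_inj.
case: (ltnP j da) => h; first by rewrite ha // mul0r.
rewrite hb ?mulr0 //.
have := ltn_ord j; move: hj'; move/eqP; lia.
Qed.

Definition qpoly (a : ps1 R) (m k : nat) : {poly C} := \poly_(l < (k.+1 - m)%N) a (l + m)%N.

Lemma trunc_dec (a : ps1 R) m k : (forall l, (l < m)%N -> a l = 0) ->
  Defs.trunc1 a k = 'X^m * qpoly a m k.
Proof.
move=> ha; apply/polyP => l; rewrite coefXnM /Defs.trunc1 /qpoly !coef_poly.
case: (ltnP l m) => hl.
  by case: ifP => // _; apply: ha.
rewrite subnK //; case: (ltnP l k.+1) => h1; case: ifP => h2 //; exfalso; move: h2; lia.
Qed.

Lemma coef_prod_trunc n (alpha : 'I_n -> ps1 R) m k (b : mi n) :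
  (forall j l, (l < m)%N -> alpha j l = 0) ->
  (\prod_(j < n) Defs.trunc1 (alpha j) k ^+ b j)`_k =
  if (k < m * mdeg b)%N then 0
  else (\prod_(j < n) qpoly (alpha j) m k ^+ b j)`_(k - m * mdeg b).
Proof.
move=> hz.
rewrite (eq_bigr (fun j => 'X^m ^+ b j * qpoly (alpha j) m k ^+ b j)); last first.
  by move=> j _; rewrite (@trunc_dec _ m) ?exprMn //; move=> l; apply: hz.
rewrite big_split /= prodrXr -exprM coefXnM.
by rewrite /mdeg.
Qed.

Lemma coef0_prod_q n (alpha : 'I_n -> ps1 R) m k (b : mi n) :
  (m <= k)%N ->
  (\prod_(j < n) qpoly (alpha j) m k ^+ b j)`_0 = mon b (fun j => alpha j m).
Proof.
move=> hmk; rewrite -horner_coef0 horner_prod /mon; apply: eq_bigr => j _.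
rewrite horner_exp horner_coef0 /qpoly coef_poly add0n.
by have -> : (0 < k.+1 - m)%N by lia.
Qed.
Lemma coef_prod_trunc' n (alpha : 'I_n -> ps1 R) m k N (b : {ffun 'I_n -> 'I_N.+1}) :
  (forall j l, (l < m)%N -> alpha j l = 0) ->
  (\prod_(j < n) Defs.trunc1 (alpha j) k ^+ b j)`_k =
  if (k < m * mdeg (mi_of b))%N then 0
  else (\prod_(j < n) qpoly (alpha j) m k ^+ mi_of b j)`_(k - m * mdeg (mi_of b)).
Proof.
move=> hz.
have -> : \prod_(j < n) Defs.trunc1 (alpha j) k ^+ b j =
          \prod_(j < n) Defs.trunc1 (alpha j) k ^+ mi_of b j.
  by apply: eq_bigr => j _; rewrite /mi_of ffunE.
exact: coef_prod_trunc.
Qed.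

Lemma pscomp_low n (f : psn R n) (alpha : 'I_n -> ps1 R) m nu k :
  (forall j l, (l < m)%N -> alpha j l = 0) -> (forall b, (mdeg b < nu)%N -> f b = 0) ->
  (k < m * nu)%N -> pscomp f alpha k = 0.
Proof.
move=> hz hf hk; rewrite /pscomp; apply: big1 => b _.
rewrite (coef_prod_trunc' (m := m)) //.
case: (ltnP (mdeg (mi_of b)) nu) => h; first by rewrite hf // mul0r.
have -> : (k < m * mdeg (mi_of b))%N by apply: leq_trans hk _; rewrite leq_mul2l h orbT.
by rewrite mulr0.
Qed.

Lemma pscomp_lead n (f : psn R n) (alpha : 'I_n -> ps1 R) m nu :
  (0 < m)%N -> (0 < nu)%N ->
  (forall j l, (l < m)%N -> alpha j l = 0) -> (forall b, (mdeg b < nu)%N -> f b = 0) ->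
  pscomp f alpha (m * nu)%N =
  \sum_(b : {ffun 'I_n -> 'I_nu.+1} | mdeg (mi_of b) == nu)
     f (mi_of b) * mon (mi_of b) (fun j => alpha j m).
Proof.
move=> hm hnu hz hf; rewrite /pscomp.
transitivity (\sum_(b : {ffun 'I_n -> 'I_(m * nu).+1})
   if mdeg (mi_of b) == nu then f (mi_of b) * mon (mi_of b) (fun j => alpha j m) else 0).
  apply: eq_bigr => b _; rewrite (coef_prod_trunc' (m := m)) //.
  case: (ltngtP (mdeg (mi_of b)) nu) => h.
  - by rewrite hf // mul0r.
  - have -> : (m * nu < m * mdeg (mi_of b))%N by rewrite ltn_pmul2l.
    by rewrite mulr0.
  - rewrite h ltnn subnn coef0_prod_q //.
    by rewrite leq_pmulr.
rewrite -big_mkcond /=; apply: (reindex_mi (fun b0 => f b0 * mon b0 (fun j => alpha j m))).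
by rewrite leq_pmull.
Qed.

Lemma initX_ext n (X : 'I_n -> psn R n) i (w w' : 'I_n -> C) :
  (forall j, w j = w' j) -> initX X i w = initX X i w'.
Proof.
move=> h; apply: eq_bigr => b _; congr (_ * _); apply: eq_bigr => j _; by rewrite h.
Qed.

Lemma initX_scale n (X : 'I_n -> psn R n) i (v : 'I_n -> C) c :
  initX X i (fun j => c * v j) = c ^+ nu0 X * initX X i v.
Proof.
rewrite /initX mulr_sumr; apply: eq_bigr => b /eqP hb.
rewrite /mon (eq_bigr (fun j => c ^+ mi_of b j * v j ^+ mi_of b j)); last first.
  by move=> j _; rewrite exprMn.
rewrite big_split /= prodrXr.
have -> : (\sum_(j < n) mi_of b j)%N = nu0 X by exact: hb.
by rewrite mulrCA.
Qed.

Lemma nu0_spec n (X : 'I_n -> psn R n) : (exists i b, X i b != 0) ->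
  (forall i, X i (mi0 n) = 0) ->
  (0 < nu0 X)%N /\ forall i b, (mdeg b < nu0 X)%N -> X i b = 0.
Proof.
move=> [i [b hb]] h0.
have Pof : forall i b, X i b != 0 -> nu0_P X (mdeg b).
  move=> i1 b1 hb1.
  have [b' hb'] := mi_of_surj (N := mdeg b1) (fun j => mdeg_ge b1 j).
  apply/existsP; exists i1; apply/existsP; exists b'; by rewrite hb' eqxx hb1.
have ex : exists k, nu0_P X k by exists (mdeg b); exact: Pof hb.
rewrite /nu0; case: excluded_middle_informative => [P|nP]; last by exfalso; apply: nP.
case: ex_minnP => nu hnu hmin; split.
  rewrite lt0n; apply/negP => /eqP e; move: hnu; rewrite e.
  move=> /existsP [i' /existsP [b' /andP [/eqP hd hx]]].
  by rewrite (mdeg0 hd) h0 eqxx in hx.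
move=> i' b' hlt; apply/eqP; apply/negPn/negP => hne.
have := hmin _ (Pof _ _ hne); lia.
Qed.

Lemma multV_spec n (alpha : 'I_n -> ps1 R) :
  (exists k, [exists i, alpha i k != 0]) ->
  (exists i, alpha i (multV alpha) != 0) /\
  forall i k, (k < multV alpha)%N -> alpha i k = 0.
Proof.
move=> ex; rewrite /multV; case: excluded_middle_informative => [P|nP]; last by exfalso; apply: nP.
case: ex_minnP => m hm hmin; split; first exact/existsP.
move=> i k hk; apply/eqP; apply/negPn/negP => h.
have := hmin k (introT existsP (ex_intro _ i h)); lia.
Qed.

Lemma ord1_spec (g : ps1 R) : (exists k, g k != 0) ->
  g (Defs.ord1 g) != 0 /\ forall l, (l < Defs.ord1 g)%N -> g l = 0.
Proof.
move=> ex; rewrite /Defs.ord1; case: excluded_middle_informative => [P|nP]; last by exfalso; apply: nP.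
case: ex_minnP => d hd hmin; split => // l hl; apply/eqP; apply/negPn/negP => h.
have := hmin l h; lia.
Qed.

Lemma ord1_0 (g : ps1 R) : (forall k, g k = 0) -> Defs.ord1 g = 0%N.
Proof.
move=> h; rewrite /Defs.ord1; case: excluded_middle_informative => // P.
by exfalso; case: P => k; rewrite h eqxx.
Qed.

Lemma rat_eq (nu d m : nat) : (0 < m)%N ->
  ((nu%:R : rat) = 1 + (d%:R - 1) / m%:R) <-> (m * nu = d + m.-1)%N.
Proof.
move=> hm.
have hm' : (m%:R : rat) != 0 by rewrite pnatr_eq0 -lt0n.
have hpm : (m.-1%:R : rat) = m%:R - 1 by rewrite -{2}(prednK hm) -natr1 addrK.
split => h.
  apply/eqP; rewrite -(eqr_nat rat) natrM natrD hpm h; apply/eqP; field => //.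
have : ((m * nu)%N%:R : rat) = (d + m.-1)%N%:R by rewrite h.
rewrite natrM natrD hpm => h2.
apply: (mulfI hm'); rewrite h2; field => //.
Qed.
Lemma X_nz n (X : 'I_n -> psn R n) (i0 : 'I_n) : isolated_sing X -> exists i b, X i b != 0.
Proof.
move=> [h0 [rho [rho0 hiso]]].
case: (Classical_Prop.classic (exists i b, X i b != 0)) => // hn; exfalso.
have hz : forall i b, X i b = 0.
  by move=> i b; apply/eqP; apply/negPn/negP => hb; apply: hn; exists i, b.
have [rE rp] := posC rho0.
pose z := fun _ : 'I_n => (complex.Re rho / 2)%:C.
have hr : nc (complex.Re rho / 2)%:C = complex.Re rho / 2 by rewrite ncC ger0_norm //; lra.
have := hiso z.
have h1 : forall i, `|z i| < rho.
  move=> i; rewrite [rho]rE; rewrite -[`|z i|]/((nc (z i))%:C) ltcR /z hr; lra.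
have h2 : forall i, Defs.sumn (X i) z 0.
  move=> i; apply/cvgP => e e0; exists 0%N => k _.
  by rewrite big1 ?subr0 ?nc0 // => b _; rewrite hz mul0r.
move=> /(_ h1 h2 i0) e.
have e' : (complex.Re rho / 2)%:C = 0 := e.
move: hr; rewrite e' nc0; lra.
Qed.

Lemma alpha_nz n (alpha : 'I_n -> ps1 R) : puiseux alpha ->
  exists k, [exists i, alpha i k != 0].
Proof.
move=> [_ [_ [eps [eps0 hinj]]]].
case: (Classical_Prop.classic (exists k, [exists i, alpha i k != 0])) => // hn; exfalso.
have hz : forall i k, alpha i k = 0.
  move=> i k; apply/eqP; apply/negPn/negP => hb; apply: hn; exists k.
  by apply/existsP; exists i.
have hs : forall t i, sum1 (alpha i) t 0.
  move=> t i; apply/cvgP => e e0; exists 0%N => k _.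
  by rewrite big1 ?subr0 ?nc0 // => b _; rewrite hz mul0r.
have [rE rp] := posC eps0.
have hr : nc (complex.Re eps / 2)%:C = complex.Re eps / 2 by rewrite ncC ger0_norm //; lra.
have h1 : `|(0 : C)| < eps by rewrite normr0.
have h2 : `|(complex.Re eps / 2)%:C| < eps.
  rewrite [eps]rE; rewrite -[`|_|]/((nc _)%:C) ltcR hr; lra.
have := hinj 0 ((complex.Re eps / 2)%:C) (fun _ => 0) (fun _ => 0) h1 h2
   (hs 0) (hs _) (fun _ => erefl).
move=> e; move: hr; rewrite -e nc0; lra.
Qed.

End Ana.

Theorem mainTheorem7 (R : realType) (n : nat) (X : 'I_n -> psn R n)
  (alpha : 'I_n -> ps1 R) (g : ps1 R) :
  holo_vf X -> isolated_sing X ->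
  puiseux alpha -> vf_invariant X alpha ->
  index_fun X alpha g ->
  ((exists w : 'I_n -> R[i], tcone alpha w /\ exists i, initX X i w != 0)
   <-> ((nu0 X)%:R = 1 + rV alpha g :> rat)).
Proof.
move=> hX hiso hpu hinv [gc hg].
have hpu' := hpu; case: hpu => hac [ha0 _].
have [[i0 hi0] hzm] := multV_spec (alpha_nz hpu').
set m := multV alpha in hi0 hzm *.
have m0 : (0 < m)%N.
  rewrite lt0n; apply/negP => /eqP e; move: hi0; rewrite e ha0 eqxx //.
have [nu0p hnu] := nu0_spec (X_nz i0 hiso) hiso.1.
set nu := nu0 X in nu0p hnu *.
pose v := fun j => alpha j m.
have lead : forall i, pscomp (X i) alpha (m * nu)%N = initX X i v.
  move=> i; rewrite (pscomp_lead (m := m) (nu := nu)) //.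
  by move=> b; apply: hnu.
have low : forall i k, (k < m * nu)%N -> pscomp (X i) alpha k = 0.
  move=> i k hk; apply: (pscomp_low (m := m) (nu := nu)) => //.
  by move=> b; apply: hnu.
have cone : forall w, tcone alpha w -> forall i,
    initX X i w = (w i0 / v i0) ^+ nu * initX X i v.
  move=> w hw i; rewrite -initX_scale; apply: initX_ext => j.
  have h := tcone_line hac hzm hi0 hw j.
  apply: (mulIf hi0); rewrite h /v; field; exact: hi0.
have vcone : tcone alpha v := tcone_v hac hzm.
case: (Classical_Prop.classic (exists k, g k != 0)) => [gnz | gz].
  have [gd gl] := ord1_spec gnz.
  rewrite /rV -/m.
  set d := Defs.ord1 g in gd gl *.
  have hder : forall i l, (l < m.-1)%N -> deriv1 (alpha i) l = 0.
    by move=> i l hl; rewrite /deriv1 hzm ?mul0rn //; lia.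
  have Plead : forall i, pscomp (X i) alpha (d + m.-1)%N = g d * (alpha i m *+ m).
    by move=> i; rewrite hg conv_lead; [rewrite /deriv1 /= (prednK m0) | exact: gl | exact: hder].
  have Plow : forall i k, (k < d + m.-1)%N -> pscomp (X i) alpha k = 0.
    by move=> i k hk; rewrite hg; exact: (@conv_low R g (deriv1 (alpha i)) d m.-1 k gl (hder i) hk).
  have P0 : pscomp (X i0) alpha (d + m.-1)%N != 0.
    by rewrite Plead mulf_neq0 // mulrn_eq0 negb_or -lt0n m0.
  split.
    move=> [w [hw [i hi]]]; apply/(rat_eq _ _ m0).
    have hvi : initX X i v != 0.
      by apply: contraNneq hi => e; rewrite cone // e mulr0.
    rewrite -lead in hvi.
    apply/eqP; rewrite eqn_leq; apply/andP; split.
      rewrite leqNgt; apply/negP => hlt; move: P0; rewrite low ?eqxx //.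
    rewrite leqNgt; apply/negP => hlt; move: hvi; rewrite Plow ?eqxx //.
  move/(rat_eq _ _ m0) => e.
  exists v; split => //; exists i0.
  by rewrite -lead e.
have gz' : forall k, g k = 0.
  by move=> k; apply/eqP; apply/negPn/negP => hk; apply: gz; exists k.
have ord0 := ord1_0 gz'.
have P0 : forall i k, pscomp (X i) alpha k = 0.
  by move=> i k; rewrite hg /mul1 big1 // => j _; rewrite gz' mul0r.
split.
  move=> [w [hw [i hi]]]; exfalso; move: hi; rewrite cone // -lead P0 mulr0 eqxx //.
rewrite /rV ord0 -/m => h; exfalso.
have h1 : (1 : rat) <= nu%:R by rewrite ler1n.
have h2 : (0 : rat) < (m%:R)^-1 by rewrite invr_gt0 ltr0n.
move: h; rewrite ?mulr0n; lra.
Qed.
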